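(* Let $G=(S,T,\pi)$ be a countable two-person win-lose game such that the family $\mathcal{B}^2_{\downarrow}(G)$ is ascending-union closed. Then for every $\mathbf{p}\in\Delta(S)$ the infimum $\inf_{\mathbf{q}\in\Delta(T)}\pi^{\mathrm{mix}}(\mathbf{p},\mathbf{q})$ is attained, the infimum $\inf_{\mathbf{q}\in\Delta(T)}\sup_{\mathbf{p}\in\Delta(S)}\pi^{\mathrm{mix}}(\mathbf{p},\mathbf{q})$ is attained, and $$\sup_{\mathbf{p}\in\Delta(S)}\min_{\mathbf{q}\in\Delta(T)}\pi^{\mathrm{mix}}(\mathbf{p},\mathbf{q})=\min_{\mathbf{q}\in\Delta(T)}\sup_{\mathbf{p}\in\Delta(S)}\pi^{\mathrm{mix}}(\mathbf{p},\mathbf{q}).$$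
   Context: A two-person win-lose game is a triple $G=(S,T,\pi)$ where $S,T$ are non-empty sets and $\pi:S\times T\to\{0,1\}$. It is countable if $|S|=|T|=\aleph_0$. For a set $X$, $\Delta(X)$ denotes the set of probability distributions on $X$ with at most countable support. For $\mathbf{p}\in\Delta(S)$, $\mathbf{q}\in\Delta(T)$, $\pi^{\mathrm{mix}}(\mathbf{p},\mathbf{q})=\sum_{s,t}p_sq_t\pi(s,t)$. For $t\in T$ let $B_t=\{s\in S:\pi(s,t)=0\}$, let $\mathcal{B}^2(G)=\{B_t:t\in T\}$, and $\mathcal{B}^2_{\downarrow}(G)=\{A\subseteq S:\exists t\in T,\ A\subseteq B_t\}$. A family $\mathcal{F}$ of sets is ascending-union closed if whenever $A_i\in\mathcal{F}$ for $i=1,2,\ldots$ and $A_1\subset A_2\subset\cdots$, then $\bigcup_{i=1}^\infty A_i\in\mathcal{F}$. *)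

(* Defs.v *)
From HB Require Import structures.
From mathcomp Require Import all_boot all_order all_algebra.
From mathcomp Require Import all_classical all_reals all_analysis.
Set Implicit Arguments. Unset Strict Implicit. Unset Printing Implicit Defensive.
Import Order.TTheory GRing.Theory Num.Theory.
Local Open Scope classical_set_scope.
Local Open Scope ring_scope.

(* A win-lose game (S,T,pi) with pi : S -> T -> bool (true = 1, false = 0). *)

(* countable = countably infinite: in bijection with nat *)
Definition countably_infinite (X : Type) : Prop :=
  exists f : nat -> X, bijective f.

(* Delta(X): probability distributions on X (countable support is automatic
   for nonnegative weights with total mass 1, summed via esum). *)
Definition is_dist (R : realType) (X : choiceType) (p : X -> R) : Prop :=
  (forall x, 0 <= p x) /\ (\esum_(x in [set: X]) (p x)%:E = 1)%E.

Definition Delta (R : realType) (X : choiceType) : set (X -> R) :=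
  [set p | is_dist p].

Definition pimix (R : realType) (S T : choiceType) (pi : S -> T -> bool)
  (p : S -> R) (q : T -> R) : \bar R :=
  \esum_(st in [set: S * T]) (p st.1 * q st.2 * (pi st.1 st.2)%:R)%:E.

Definition Bt (S T : Type) (pi : S -> T -> bool) (t : T) : set S :=
  [set s | pi s t = false].

Definition B2down (S T : Type) (pi : S -> T -> bool) : set (set S) :=
  [set A | exists t, A `<=` Bt pi t].

Definition ascending_union_closed (X : Type) (F : set (set X)) : Prop :=
  forall A : nat -> set X, (forall i, F (A i)) ->
    (forall i, A i `<` A i.+1) -> F (\bigcup_i A i).

(* Main.v *)
Require Import Defs.
From HB Require Import structures.
From mathcomp Require Import all_boot all_order all_algebra.
From mathcomp Require Import all_classical all_reals all_analysis.
From mathcomp Require Import ring lra.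
Import Order.TTheory GRing.Theory Num.Theory.

Module Farkas.
Local Set Implicit Arguments.
Local Unset Strict Implicit.
Local Open Scope ring_scope.
Section Farkas.
Variables (R : realFieldType) (I : finType).

Definition dot (u x : I -> R) := \sum_i u i * x i.

Lemma dotBr u y x c : dot u (fun i => y i - c * x i) = dot u y - c * dot u x.
Proof.
rewrite /dot mulr_sumr -sumrB; apply: eq_bigr => i _; ring.
Qed.

Lemma dotBl u w y c : dot (fun i => u i - c * w i) y = dot u y - c * dot w y.
Proof.
rewrite /dot mulr_sumr -sumrB; apply: eq_bigr => i _; ring.
Qed.

Lemma farkas (n : nat) (a : nat -> I -> R) (b : I -> R) :
  (exists lam : nat -> R, (forall k, 0 <= lam k) /\
      forall i, b i = \sum_(k < n) lam k * a k i) \/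
  (exists x : I -> R, (forall k, (k < n)%N -> 0 <= dot (a k) x) /\ dot b x < 0).
Proof.
elim: n a b => [|n IH] a b.
  have [b0|] := boolP [forall i, b i == 0].
    left; exists (fun=> 0); split => // i; rewrite big_ord0.
    by move/forallP: b0 => /(_ i)/eqP.
  rewrite negb_forall => /existsP[i0 bi0].
  right; exists (fun i => - b i); split => //.
  have -> : dot b (fun i => - b i) = - \sum_i b i * b i.
    by rewrite /dot -sumrN; apply: eq_bigr => i _; rewrite mulrN.
  rewrite oppr_lt0 (bigD1 i0) //=.
  rewrite addrC; apply: ltr_pwDr; first by rewrite -expr2 exprn_even_gt0.
  by apply: sumr_ge0 => i _; rewrite -expr2 sqr_ge0.
have [[lam [lam0 hb]]|[x [hx hbx]]] := IH a b.
  left; exists (fun k => if k == n then 0 else lam k); split.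
    by move=> k; case: ifP.
  move=> i; rewrite big_ord_recr /= eqxx mul0r addr0 hb.
  by apply: eq_bigr => k _; rewrite ifN // ltn_eqF.
have [anx|anx] := leP 0 (dot (a n) x).
  right; exists x; split => // k; rewrite ltnS leq_eqVlt => /orP[/eqP->//|]; exact: hx.
set al := dot (a n) x.
have al0 : al != 0 by rewrite lt_eqF.
pose a' k i := a k i - dot (a k) x / al * a n i.
pose b' i := b i - dot b x / al * a n i.
have [[lam [lam0 hb]]|[y [hy hby]]] := IH a' b'.
  left.
  pose num := dot b x - \sum_(k < n) lam k * dot (a k) x.
  exists (fun k => if (k < n)%N then lam k else num / al); split.
    move=> k; case: ifP => // _; rewrite ler_ndivlMr // mul0r /num.
    rewrite subr_le0; apply: le_trans (ltW hbx) _.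
    by apply: sumr_ge0 => k' _; rewrite mulr_ge0 // hx.
  move=> i; rewrite big_ord_recr /= ltnn.
  have -> : \sum_(k < n) (if (k < n)%N then lam k else num / al) * a k i =
            \sum_(k < n) lam k * a k i by apply: eq_bigr => k _; rewrite ltn_ord.
  have := hb i; rewrite /b' /a' => hbi.
  have E : \sum_(k < n) lam k * (a k i - dot (a k) x / al * a n i) =
            \sum_(k < n) lam k * a k i - (\sum_(k < n) lam k * dot (a k) x) / al * a n i.
    rewrite mulr_suml mulr_suml -sumrB; apply: eq_bigr => k _; ring.
  rewrite E in hbi.
  rewrite /num.
  have : b i = \sum_(k < n) lam k * a k i - (\sum_(k < n) lam k * dot (a k) x) / al * a n i + dot b x / al * a n i.
    by rewrite -hbi; ring.
  move=> ->; field; exact: al0.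
right; pose z i := y i - dot (a n) y / al * x i.
exists z; split.
  move=> k; rewrite ltnS leq_eqVlt => /orP[/eqP->|kn].
    rewrite /z dotBr -/al divfK // subrr //.
  have := hy k kn; rewrite /a' dotBl /z dotBr.
  by have -> : dot (a k) x / al * dot (a n) y = dot (a n) y / al * dot (a k) x by ring.
move: hby; rewrite /b' dotBl /z dotBr.
by have -> : dot b x / al * dot (a n) y = dot (a n) y / al * dot b x by ring.
Qed.

End Farkas.
End Farkas.

Module Game.
Local Set Implicit Arguments.
Local Unset Strict Implicit.
Import Farkas.
Local Open Scope ring_scope.
Section Game.
Variable (R : realFieldType).

Lemma sum_last m (F : 'I_m.+1 -> R) :
  \sum_(i < m.+1) F i = \sum_(i < m) F (lift ord_max i) + F ord_max.
Proof. by rewrite big_ord_recr /=; congr (_ + _); apply: eq_bigr => i _; congr F; apply: val_inj; rewrite /= /bump leqNgt ltn_ord. Qed.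

Lemma game_alt (m N : nat) (A : 'I_m -> 'I_N -> R) (c : R) : (0 < N)%N ->
 (exists q : 'I_N -> R, (forall j, 0 <= q j) /\ \sum_j q j = 1 /\
     forall i, \sum_j A i j * q j <= c) \/
 (exists p : 'I_m -> R, (forall i, 0 <= p i) /\ \sum_i p i = 1 /\
     forall j, c < \sum_i p i * A i j).
Proof.
move=> N0.
pose col (j : 'I_N) (i : 'I_m.+1) : R :=
  if unlift ord_max i is Some i' then A i' j else 1.
pose unit (k' : nat) (i : 'I_m.+1) : R :=
  if unlift ord_max i is Some i' then ((i' : nat) == k')%:R else 0.
pose b (i : 'I_m.+1) : R := if unlift ord_max i is Some _ then c else 1.
pose a (k : nat) : 'I_m.+1 -> R :=
  if (k < N)%N then col (Ordinal (n:=N) (m:=k %% N) (ltn_pmod k N0)) else unit (k - N)%N.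
have aN (j : 'I_N) : a j = col j.
  rewrite /a ltn_ord; congr col; apply: val_inj => /=; rewrite modn_small //.
have aU (i : 'I_m) : a (N + i)%N = unit i.
  by rewrite /a ltnNge leq_addr /= addKn.
have [[lam [lam0 hb]]|[x [hx hbx]]] := farkas (N + m) a b.
  left; exists (fun j => lam j); split => //.
  have hb' i : b i = \sum_(j < N) lam j * col j i + \sum_(k < m) lam (N + k)%N * unit k i.
    rewrite hb big_split_ord /=; congr (_ + _); apply: eq_bigr => k _.
      by rewrite aN.
    by rewrite aU.
  split.
    have := hb' ord_max; rewrite /b /col /unit unlift_none.
    rewrite /= [X in _ = _ + X]big1 ?addr0; last by move=> k _; rewrite mulr0.
    by move=> ->; apply: eq_bigr => j _; rewrite mulr1.
  move=> i; have := hb' (lift ord_max i); rewrite /b /col /unit liftK => ->.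
  rewrite -[X in X <= _]addr0; apply: lerD.
    by apply: ler_sum => j _; rewrite mulrC.
  by apply: sumr_ge0 => k _; rewrite mulr_ge0.
right.
pose s := \sum_(i < m) x (lift ord_max i).
have xi0 (i : 'I_m) : 0 <= x (lift ord_max i).
  have := hx (N + i)%N; rewrite ltn_add2l ltn_ord aU => /(_ isT).
  rewrite /dot sum_last /unit unlift_none mul0r addr0.
  under eq_bigr do rewrite liftK.
  rewrite (bigD1 i) //= eqxx mul1r big1 ?addr0 // => k ki.
  by move: ki; rewrite -(inj_eq val_inj) => /negPf ->; rewrite mul0r.
have hcol (j : 'I_N) : 0 <= \sum_(i < m) A i j * x (lift ord_max i) + x ord_max.
  have := hx j (leq_trans (ltn_ord j) (leq_addr m N)); rewrite aN.
  by rewrite /dot sum_last /col unlift_none mul1r; under eq_bigr do rewrite liftK.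
have hbx' : c * s + x ord_max < 0.
  move: hbx; rewrite /dot sum_last /b unlift_none mul1r /s mulr_sumr.
  by under eq_bigr do rewrite liftK.
have s0 : 0 < s.
  rewrite lt_neqAle sumr_ge0 // andbT; apply/eqP => s0.
  have := hcol (Ordinal N0).
  rewrite big1 ?add0r; last first.
    by move=> i _; rewrite (psumr_eq0P (fun i _ => xi0 i) (esym s0)) // mulr0.
  by move: hbx'; rewrite -s0 mulr0 add0r => /lt_le_trans h /h; rewrite ltxx.
exists (fun i => x (lift ord_max i) / s); split.
  by move=> i; rewrite divr_ge0 // ltW.
split; first by rewrite -mulr_suml divff // gt_eqF.
move=> j; have := hcol j.
have -> : \sum_(i < m) x (lift ord_max i) / s * A i j =
          (\sum_(i < m) A i j * x (lift ord_max i)) / s.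
  by rewrite mulr_suml; apply: eq_bigr => i _; ring.
rewrite ltr_pdivlMr //; lra.
Qed.

End Game.
End Game.

Module Ultra.
Local Set Implicit Arguments.
Local Unset Strict Implicit.
Local Open Scope classical_set_scope.
Local Open Scope ring_scope.
Section Ultra.
Variables (R : realType) (U : set_system nat).
Hypothesis UU : UltraFilter U.
Hypothesis Uoo : forall N, U [set n | (N <= n)%N].

Definition ulim (x : nat -> R) (l : R) :=
  forall e, 0 < e -> U [set n | `|x n - l| < e].

Lemma U_ex (A : set nat) : U A -> exists n, A n.
Proof. by move=> UA; have /filter_ex [n An] := UA; exists n. Qed.

Lemma ulim_ex x M : (forall n, `|x n| <= M) -> exists l, ulim x l.
Proof.
move=> xM.
pose A := [set c : R | U [set n | c <= x n]].
have A0 : A (- M).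
  apply: filterS (filterT) => n _ /=; move: (xM n); rewrite ler_norml; by case/andP.
have Aub : ubound A M.
  move=> c Ac; rewrite leNgt; apply/negP => Mc.
  have [n /= cn] := U_ex Ac.
  by move: (xM n); rewrite ler_norml => /andP[_ /(le_trans cn)]; rewrite leNgt Mc.
have hA : has_sup A by split; [exists (- M) | exists M].
exists (sup A) => e e0.
have [c Ac ce] := sup_adherent (e0) hA.
have h2 : ~ A (sup A + e / 2).
  by move=> /(sup_upper_bound hA) h; lra.
have [//|UC] := in_ultra_setVsetC [set n | sup A + e / 2 <= x n] UU.
apply: filterS (filterI Ac UC) => n [/= cn /negP]; rewrite -ltNge => xn.
rewrite ltr_norml; apply/andP; split; first by lra.
lra.
Qed.

Lemma ulim_uniq x l1 l2 : ulim x l1 -> ulim x l2 -> l1 = l2.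
Proof.
move=> h1 h2; apply/eqP; rewrite -subr_eq0 -normr_eq0; apply: contraT => ne.
have e0 : 0 < `|l1 - l2| / 2 by rewrite divr_gt0 // lt_neqAle normr_ge0 andbT eq_sym.
have [n [/= a b]] := U_ex (filterI (h1 _ e0) (h2 _ e0)).
have : `|l1 - l2| <= `|x n - l1| + `|x n - l2|.
  have -> : l1 - l2 = (x n - l2) - (x n - l1) by ring.
  by apply: le_trans (ler_normB _ _) _; rewrite addrC.
lra.
Qed.

Definition L (x : nat -> R) : R := xget 0 [set l | ulim x l].

Definition bnd (x : nat -> R) := exists M, forall n, `|x n| <= M.

Lemma L_ulim x : bnd x -> ulim x (L x).
Proof. by move=> [M xM]; rewrite /L; apply: xgetPex; exact: ulim_ex xM. Qed.

Lemma L_eq x l : ulim x l -> L x = l.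
Proof.
move=> h; apply: ulim_uniq (h); apply: (@xgetPex _ 0 [set l | ulim x l]).
by exists l.
Qed.

Lemma ulimD x y l l' : ulim x l -> ulim y l' -> ulim (fun n => x n + y n) (l + l').
Proof.
move=> hx hy e e0; have e2 : 0 < e / 2 by rewrite divr_gt0.
apply: filterS (filterI (hx _ e2) (hy _ e2)) => n [/= a b].
rewrite (le_lt_trans (_ : _ <= `|x n - l| + `|y n - l'|)) //; last by lra.
by rewrite (le_trans _ (ler_normD _ _)) // addrACA opprD.
Qed.

Lemma ulimZ c x l : ulim x l -> ulim (fun n => c * x n) (c * l).
Proof.
move=> hx e e0; have e1 : 0 < e / (`|c| + 1) by rewrite divr_gt0 // ltr_wpDl.
apply: filterS (hx _ e1) => n /= h.
rewrite -mulrBr normrM (le_lt_trans (_ : _ <= `|c| * (e / (`|c| + 1)))) //.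
  by rewrite ler_wpM2l // ltW.
rewrite mulrA ltr_pdivrMr ?ltr_wpDl // mulrC ltr_pM2l //; lra.
Qed.

Lemma ulim_cst c : ulim (fun=> c) c.
Proof. by move=> e e0; apply: filterS filterT => n _ /=; rewrite subrr normr0. Qed.

Lemma ulim_le x y l l' : ulim x l -> ulim y l' -> U [set n | x n <= y n] -> l <= l'.
Proof.
move=> hx hy hxy; rewrite leNgt; apply/negP => ll.
have e0 : 0 < (l - l') / 2 by rewrite divr_gt0 // subr_gt0.
have [n [[/= a b] c]] := U_ex (filterI (filterI (hx _ e0) (hy _ e0)) hxy).
move: a b; rewrite !ltr_norml => /andP[a1 a2] /andP[b1 b2]; lra.
Qed.

Lemma bndD x y : bnd x -> bnd y -> bnd (fun n => x n + y n).
Proof.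
move=> [M hM] [M' hM']; exists (M + M') => n.
by rewrite (le_trans (ler_normD _ _)) // lerD.
Qed.

Lemma bndZ c x : bnd x -> bnd (fun n => c * x n).
Proof.
move=> [M hM]; exists (`|c| * M) => n.
by rewrite normrM ler_wpM2l.
Qed.

Lemma bnd_cst c : bnd (fun=> c).
Proof. by exists `|c|. Qed.

Lemma LD x y : bnd x -> bnd y -> L (fun n => x n + y n) = L x + L y.
Proof. by move=> bx by'; apply: L_eq; apply: ulimD; apply: L_ulim. Qed.

Lemma LZ c x : bnd x -> L (fun n => c * x n) = c * L x.
Proof. by move=> bx; apply: L_eq; apply: ulimZ; apply: L_ulim. Qed.

Lemma L_cst c : L (fun=> c) = c.
Proof. by apply: L_eq; apply: ulim_cst. Qed.

Lemma L_le x y : bnd x -> bnd y -> U [set n | x n <= y n] -> L x <= L y.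
Proof. by move=> bx by' h; apply: ulim_le h; apply: L_ulim. Qed.

Lemma L_le_ev x y : bnd x -> bnd y -> (exists N, forall n, (N <= n)%N -> x n <= y n) -> L x <= L y.
Proof.
move=> bx by' [N h]; apply: L_le => //; apply: filterS (Uoo N) => n /=; exact: h.
Qed.

End Ultra.
End Ultra.

Module Chain.
Local Set Implicit Arguments.
Local Unset Strict Implicit.
Import Ultra.
Local Open Scope classical_set_scope.
Lemma auc_weak (X : Type) (F : set (set X)) : ascending_union_closed F ->
  forall A : nat -> set X, (forall i, F (A i)) -> (forall i, A i `<=` A i.+1) ->
  F (\bigcup_i A i).
Proof.
move=> auc A FA Ainc.
have mono i j : (i <= j)%N -> A i `<=` A j.
  elim: j => [|j IH]; first by rewrite leqn0 => /eqP->.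
  rewrite leq_eqVlt => /orP[/eqP->//|]; rewrite ltnS => /IH h.
  exact: subset_trans h (Ainc j).
have [[i0 hi0]|nst] := pselect (exists i0, forall j, A j `<=` A i0).
  suff -> : \bigcup_i A i = A i0 by [].
  apply/seteqP; split; last by move=> x Ax; exists i0.
  by move=> x [j _ Ajx]; exact: hi0 Ajx.
have nx i0 : {j | ~ (A j `<=` A i0)}.
  apply: cid; apply: contrapT => h; apply: nst; exists i0 => j.
  by apply: contrapT => hj; apply: h; exists j.
pose nxt i0 := proj1_sig (nx i0).
have nxt_gt i0 : (i0 < nxt i0)%N.
  rewrite ltnNge; apply/negP => le; apply: (proj2_sig (nx i0)); exact: mono.
pose h n := iter n nxt 0%N.
have hn n : (n <= h n)%N.
  elim: n => // n IH /=; exact: leq_ltn_trans IH (nxt_gt _).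
have -> : \bigcup_i A i = \bigcup_i A (h i).
  apply/seteqP; split => x [j _ Ajx].
    by exists j => //; exact: (mono _ _ (hn j)).
  by exists (h j).
apply: auc => // i; split; first by apply: mono; exact: ltnW (nxt_gt _).
exact: (proj2_sig (nx (h i))).
Qed.

Section Limit.
Variables (R : realType) (S T : choiceType) (pi : S -> T -> bool).
Variables (e : nat -> S) (ie : S -> nat).
Hypothesis ieK : cancel ie e.
Hypothesis eK : cancel e ie.
Hypothesis AUC : ascending_union_closed (B2down pi).
Variable U : set_system nat.
Hypothesis UU : UltraFilter U.
Hypothesis Uoo : forall N, U [set n | (N <= n)%N].

Lemma limit_col (t : nat -> T) : exists ts : T, forall k N0, exists n,
  (N0 <= n)%N /\ forall i, (i < k)%N -> pi (e i) ts -> pi (e i) (t n).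
Proof.
pose Az i := U [set n | ~~ pi (e i) (t n)].
pose W k := [set n | forall i, (i < k)%N ->
   (Az i -> ~~ pi (e i) (t n)) /\ (~ Az i -> pi (e i) (t n))].
have UW k : U (W k).
  elim: k => [|k IH].
    by apply: filterS filterT => n _ i.
  have [Ak|nAk] := pselect (Az k).
    apply: filterS (filterI IH Ak) => n [Wn /= hn] i; rewrite ltnS leq_eqVlt.
    by case/orP => [/eqP->|/Wn//]; split => // /(_ Ak).
  have [//|UC] := in_ultra_setVsetC [set n | ~~ pi (e k) (t n)] UU.
  apply: filterS (filterI IH UC) => n [Wn /= hn] i; rewrite ltnS leq_eqVlt.
  case/orP => [/eqP->|/Wn//]; split.
    by move=> hk; exfalso; exact: nAk hk.
  by move=> _; apply: contrapT => /negP.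
pose C k := [set s | (ie s < k)%N /\ Az (ie s)].
have BC k : B2down pi (C k).
  have [n Wn] := U_ex UU (UW k).
  exists (t n) => s [sk As]; rewrite /Bt /=.
  by have [/(_ As)] := Wn _ sk; rewrite ieK => /negPf.
have [ts hts] : B2down pi (\bigcup_k C k).
  apply: auc_weak => // k s [sk As]; split => //; exact: ltnW.
exists ts => k N0.
have [n [Wn Nn]] := U_ex UU (filterI (UW k) (Uoo N0)).
exists n; split => // i ik pits.
have [_ ] := Wn _ ik; apply; move=> Ai.
have : (\bigcup_k C k) (e i) by exists (ie (e i)).+1 => //; rewrite /C /= eK; split.
by move/hts; rewrite /Bt /= pits.
Qed.

End Limit.
End Chain.

Module Constr.
Local Set Implicit Arguments.
Local Unset Strict Implicit.
Import Ultra.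
Local Open Scope classical_set_scope.
Local Open Scope ring_scope.
Section Constr.
Variables (R : realType) (T : choiceType) (pe : nat -> T -> bool).
Variables (g : nat -> T) (ig : T -> nat).
Hypothesis igK : cancel ig g.
Variable U : set_system nat.
Hypothesis UU : UltraFilter U.
Hypothesis Uoo : forall N, U [set n | (N <= n)%N].
Variable mu : (T -> bool) -> R.
Hypothesis mu_ge0 : forall P, 0 <= mu P.
Hypothesis muT : mu (fun=> true) = 1.
Hypothesis mu_add : forall P Q,
  mu P = mu (fun t => P t && Q t) + mu (fun t => P t && ~~ Q t).
Variable v : R.
Hypothesis mu_cov : forall i, mu (pe i) <= v.
Hypothesis hlim : forall t : nat -> T, exists ts, forall k N0, exists n,
  (N0 <= n)%N /\ forall i, (i < k)%N -> pe i ts -> pe i (t n).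

Implicit Types P Q : T -> bool.

Lemma mu_ext P Q : P =1 Q -> mu P = mu Q.
Proof. by move=> PQ; rewrite (funext PQ). Qed.

Lemma mu_mono P Q : (forall t, P t -> Q t) -> mu P <= mu Q.
Proof.
move=> PQ; rewrite (mu_add Q P) (@mu_ext (fun t => Q t && P t) P).
  by rewrite lerDl.
by move=> t; case: (boolP (P t)) => [/PQ ->|]; rewrite ?andbF.
Qed.

Lemma mu_le1 P : mu P <= 1.
Proof. by rewrite -muT; apply: mu_mono. Qed.

Lemma mu0 : mu (fun=> false) = 0.
Proof.
by have := mu_add (fun=> false) (fun=> false) => /= h; lra.
Qed.

Lemma mu_pos P : 0 < mu P -> exists t, P t.
Proof.
move=> h; apply: contrapT => hn; move: h.
rewrite (@mu_ext P (fun=> false)) ?mu0 ?ltxx // => t.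
by apply/negP => Pt; apply: hn; exists t.
Qed.

Lemma mu_diff P Q : (forall t, P t -> Q t) ->
  mu (fun t => Q t && ~~ P t) = mu Q - mu P.
Proof.
move=> PQ; rewrite (mu_add Q P) (@mu_ext (fun t => Q t && P t) P); first by ring.
by move=> t; case: (boolP (P t)) => [/PQ ->|]; rewrite ?andbF.
Qed.

Lemma mu_or P Q : mu (fun t => P t || Q t) <= mu P + mu Q.
Proof.
rewrite (mu_add _ P) (@mu_ext (fun t => (P t || Q t) && P t) P); last first.
  by move=> t; case: (P t); rewrite ?andbF.
by rewrite lerD2l; apply: mu_mono => t; case: (P t); rewrite ?andbT.
Qed.

Lemma mu_band P (b : bool) : mu (fun t => P t && b) = b%:R * mu P.
Proof.
case: b; rewrite ?mul1r ?mul0r.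
  by apply: mu_ext => t; rewrite andbT.
by rewrite (@mu_ext _ (fun=> false)) ?mu0 // => t; rewrite andbF.
Qed.

Lemma mu_exists n (X : 'I_n -> T -> bool) :
  mu (fun t => [exists N, X N t]) <= \sum_(N < n) mu (X N).
Proof.
elim: n X => [|n IH] X.
  rewrite big_ord0 (@mu_ext _ (fun=> false)) ?mu0 // => t.
  by apply/existsP => -[[]].
rewrite big_ord_recr /=.
apply: le_trans (_ : mu (fun t => [exists N, X (widen_ord (leqnSn n) N) t] || X ord_max t) <= _).
  apply: mu_mono => t /existsP[N XN]; have [Nn|] := ltnP N n.
    by apply/orP; left; apply/existsP; exists (Ordinal Nn); congr X: XN; apply: val_inj.
  move=> nN; have NM : N = ord_max by apply: val_inj => /=; apply/eqP; rewrite eqn_leq nN -ltnS ltn_ord.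
  by rewrite -NM XN orbT.
by apply: le_trans (mu_or _ _) _; rewrite lerD2r; apply: IH.
Qed.

Definition adm k t j := [forall i : 'I_k, ~~ pe i t ==> ~~ pe i (g j)].

Lemma adm_ex k t : exists j, adm k t j.
Proof. by exists (ig t); apply/forallP => i; rewrite igK implybb. Qed.

Definition psi k t := ex_minn (adm_ex k t).

Lemma psi_adm k t : adm k t (psi k t).
Proof. by rewrite /psi; case: ex_minnP. Qed.

Lemma psi_min k t j : adm k t j -> (psi k t <= j)%N.
Proof. by rewrite /psi; case: ex_minnP => m _ h /h. Qed.

Lemma psi_mono k k' t : (k <= k')%N -> (psi k t <= psi k' t)%N.
Proof.
move=> kk; apply: psi_min; apply/forallP => i.
have /forallP/(_ (widen_ord kk i)) := psi_adm k' t; done.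
Qed.

Lemma psi_cov i k t : (i < k)%N -> pe i (g (psi k t)) -> pe i t.
Proof.
move=> ik; have /forallP/(_ (Ordinal ik)) /= := psi_adm k t.
by case: (pe i t); case: (pe i (g _)).
Qed.

Definition m k N := mu (fun t => (psi k t <= N)%N).

Lemma bnd01 (x : nat -> R) : (forall k, 0 <= x k <= 1) -> bnd x.
Proof.
by move=> h; exists 1 => k; have /andP[h0 h1] := h k; rewrite ger0_norm.
Qed.

Lemma bnd_m N : bnd (fun k => m k N).
Proof. by apply: bnd01 => k; rewrite mu_ge0 mu_le1. Qed.

Definition F N := L U (fun k => m k N).

Lemma m_dec k k' N : (k <= k')%N -> m k' N <= m k N.
Proof. by move=> kk; apply: mu_mono => t; apply: leq_trans; exact: psi_mono. Qed.

Lemma F_le k N : F N <= m k N.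
Proof.
rewrite -[X in _ <= X](L_cst UU (m k N)); apply: (L_le_ev UU Uoo) => //.
  exact: bnd_m.
  exact: bnd_cst.
by exists k => n kn; apply: m_dec.
Qed.

Lemma F_approx N d : 0 < d -> exists k, m k N <= F N + d.
Proof.
move=> d0; apply: contrapT => hn.
have : L U (fun=> F N + d) <= F N.
  rewrite [X in _ <= X]/F; apply: (L_le UU (bnd_cst _) (bnd_m N)); apply: filterS filterT => k _ /=.
  by apply/ltW; rewrite ltNge; apply/negP => h; apply: hn; exists k.
by rewrite L_cst // -subr_le0 addrAC subrr add0r leNgt d0.
Qed.

Lemma F_mono N : F N <= F N.+1.
Proof.
apply: (L_le UU (bnd_m _) (bnd_m _)); apply: filterS filterT => k _ /=.
by apply: mu_mono => t /leqW.
Qed.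

Lemma F_ge0 N : 0 <= F N.
Proof.
rewrite -(L_cst UU 0); apply: (L_le UU (bnd_cst _) (bnd_m N)).
by apply: filterS filterT => k _ /=; apply: mu_ge0.
Qed.

Lemma F_le1 N : F N <= 1.
Proof. by apply: le_trans (F_le 0 N) _; apply: mu_le1. Qed.

Definition r j := if j is j'.+1 then F j - F j' else F 0.

Lemma r_ge0 j : 0 <= r j.
Proof. by case: j => [|j] /=; rewrite ?F_ge0 // subr_ge0 F_mono. Qed.

Lemma sum_r N : \sum_(j < N.+1) r j = F N.
Proof.
elim: N => [|N IH]; first by rewrite big_ord1.
by rewrite big_ord_recr /= IH addrC subrK.
Qed.

Lemma sum_r_le1 N : \sum_(j < N) r j <= 1.
Proof. by case: N => [|N]; rewrite ?big_ord0 // sum_r F_le1. Qed.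

Definition mm k j := if j is j'.+1 then m k j - m k j' else m k 0.

Lemma bnd_mm j : bnd (fun k => mm k j).
Proof.
case: j => [|j] /=; first exact: bnd_m.
have -> : (fun k => m k j.+1 - m k j) = (fun k => m k j.+1 + (-1) * m k j).
  by apply: funext => k; ring.
by apply: bndD; [exact: bnd_m|apply: bndZ; exact: bnd_m].
Qed.

Lemma L_mm j : L U (fun k => mm k j) = r j.
Proof.
case: j => [|j] //=.
have -> : (fun k => m k j.+1 - m k j) = (fun k => m k j.+1 + (-1) * m k j).
  by apply: funext => k; ring.
rewrite LD //; [|exact: bnd_m|apply: bndZ; exact: bnd_m].
by rewrite LZ //; [rewrite /F; ring|exact: bnd_m].
Qed.

Lemma bnd_sum n (x : nat -> nat -> R) : (forall j, bnd (x j)) ->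
  bnd (fun k => \sum_(j < n) x j k).
Proof.
move=> h; elim: n => [|n IH].
  by exists 0 => k; rewrite big_ord0 normr0.
have -> : (fun k => \sum_(j < n.+1) x j k) =
          (fun k => \sum_(j < n) x j k + x n k).
  by apply: funext => k; rewrite big_ord_recr.
exact: bndD.
Qed.

Lemma L_sum n (x : nat -> nat -> R) : (forall j, bnd (x j)) ->
  L U (fun k => \sum_(j < n) x j k) = \sum_(j < n) L U (x j).
Proof.
move=> h; elim: n => [|n IH].
  by rewrite big_ord0 (_ : (fun k => _) = fun=> 0) ?L_cst // funeqE => k; rewrite big_ord0.
have -> : (fun k => \sum_(j < n.+1) x j k) =
          (fun k => \sum_(j < n) x j k + x n k).
  by apply: funext => k; rewrite big_ord_recr.
by rewrite LD // ?IH ?big_ord_recr //; exact: bnd_sum.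
Qed.

Lemma hsum k N i : \sum_(j < N.+1) mm k j * (pe i (g j))%:R =
  mu (fun t => (psi k t <= N)%N && pe i (g (psi k t))).
Proof.
elim: N => [|N IH].
  rewrite big_ord1 /=.
  rewrite (@mu_ext _ (fun t => (psi k t <= 0)%N && pe i (g 0))); last first.
    by move=> t; rewrite leqn0; case: eqP => [->|].
  by rewrite mu_band mulrC.
rewrite big_ord_recr /= IH.
rewrite [RHS](mu_add _ (fun t => (psi k t <= N)%N)).
rewrite (@mu_ext (fun t => ((psi k t <= N.+1)%N && pe i (g (psi k t))) && (psi k t <= N)%N)
                 (fun t => (psi k t <= N)%N && pe i (g (psi k t)))); last first.
  by move=> t; case: (leqP (psi k t) N) => h; rewrite ?andbT ?andbF // (leqW h).
rewrite (@mu_ext (fun t => ((psi k t <= N.+1)%N && pe i (g (psi k t))) && ~~ (psi k t <= N)%N)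
                 (fun t => ((psi k t <= N.+1)%N && ~~ (psi k t <= N)%N) && pe i (g N.+1))); last first.
  move=> t; case: (leqP (psi k t) N) => h; rewrite ?andbT ?andbF //=.
  case: (leqP (psi k t) N.+1) => h2 //=.
  by have -> : psi k t = N.+1 by apply/eqP; rewrite eqn_leq h2 h.
rewrite mu_band mu_diff; last by move=> t /leqW.
by rewrite mulrC.
Qed.

Lemma bndZr (c : R) (x : nat -> R) : bnd x -> bnd (fun k => x k * c).
Proof.
move=> bx; have -> : (fun k => x k * c) = (fun k => c * x k) by apply: funext => k; rewrite mulrC.
exact: bndZ.
Qed.

Lemma LZr (c : R) (x : nat -> R) : bnd x -> L U (fun k => x k * c) = L U x * c.
Proof.
move=> bx; have -> : (fun k => x k * c) = (fun k => c * x k) by apply: funext => k; rewrite mulrC.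
by rewrite LZ // mulrC.
Qed.

Lemma coverage i N : \sum_(j < N) r j * (pe i (g j))%:R <= v.
Proof.
have v0 : 0 <= v by apply: le_trans (mu_cov i).
case: N => [|N]; first by rewrite big_ord0.
have E : \sum_(j < N.+1) r j * (pe i (g j))%:R =
          L U (fun k => \sum_(j < N.+1) mm k j * (pe i (g j))%:R).
  have := @L_sum N.+1 (fun j k => mm k j * (pe i (g j))%:R).
  rewrite /= => ->; last by move=> j; apply: bndZr; exact: bnd_mm.
  by apply: eq_bigr => j _; rewrite LZr ?L_mm //; exact: bnd_mm.
have bs : bnd (fun k => \sum_(j < N.+1) mm k j * (pe i (g j))%:R).
  by apply: (@bnd_sum N.+1 (fun j k => mm k j * (pe i (g j))%:R)) => j; apply: bndZr; exact: bnd_mm.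
rewrite E -(L_cst UU v); apply: (L_le_ev UU Uoo bs (bnd_cst v)).
exists i.+1 => k ik; rewrite hsum; apply: le_trans (mu_cov i).
by apply: mu_mono => t /andP[_ h]; exact: psi_cov ik h.
Qed.

Lemma geom n : \sum_(N < n) (2^-1 : R) ^+ N <= 2.
Proof.
have h : \sum_(N < n) (2^-1 : R) ^+ N = 2 - 2 * (2^-1) ^+ n.
  elim: n => [|n IH]; first by rewrite big_ord0 expr0; ring.
  by rewrite big_ord_recr /= IH exprS; field.
rewrite h; have : 0 <= (2^-1 : R) ^+ n by apply: exprn_ge0; rewrite invr_ge0.
lra.
Qed.

Lemma no_escape eps : 0 < eps -> exists N, 1 - eps < F N.
Proof.
move=> e0; apply: contrapT => hn.
have hF N : F N <= 1 - eps.
  by rewrite leNgt; apply/negP => h; apply: hn; exists N.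
pose d N : R := eps / 8 * (2^-1) ^+ N.
have h2 : (0 : R) < 2^-1 by lra.
have h2' : (2^-1 : R) <= 1 by lra.
have d0 N : 0 < d N by rewrite /d mulr_gt0 ?divr_gt0 // exprn_gt0.
have dle N : d N <= eps / 8.
  rewrite /d -[X in _ <= X]mulr1; apply: ler_wpM2l; first by rewrite divr_ge0 // ltW.
  exact: exprn_ile1 (ltW h2) h2'.
have dsum M : \sum_(N < M) d N <= eps / 4.
  rewrite /d -mulr_sumr; apply: le_trans (_ : eps / 8 * 2 <= _).
    by rewrite ler_wpM2l ?geom // divr_ge0 // ltW.
  by have -> : eps / 8 * 2 = eps / 4 by field.
pose kN N := proj1_sig (cid (F_approx N (d0 N))).
have hkN N : m (kN N) N <= F N + d N := proj2_sig (cid (F_approx N (d0 N))).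
pose K M := \max_(N < M.+1) kN N.
have kN_le M (N : 'I_M.+1) : (kN N <= K M)%N by apply: (leq_bigmax N).
pose H M t := [forall N : 'I_M.+1, (N < psi (kN N) t)%N].
have muH M : 0 < mu (H M).
  pose A t := (M < psi (K M) t)%N.
  pose X (N : 'I_M.+1) t := ((N < psi (K M) t)%N && (psi (kN N) t <= N)%N).
  have muA : mu A = 1 - m (K M) M.
    rewrite -muT -mu_diff // /A; apply: mu_ext => t /=; by rewrite ltnNge.
  have mA : m (K M) M <= F M + d M.
    apply: le_trans (hkN M); apply: m_dec.
    exact: (kN_le M ord_max).
  have muX (N : 'I_M.+1) : mu (X N) <= d N.
    rewrite (@mu_ext _ (fun t => (psi (kN N) t <= N)%N && ~~ (psi (K M) t <= N)%N)); last first.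
      by move=> t; rewrite /X ltnNge andbC.
    rewrite mu_diff; last first.
      by move=> t; apply: leq_trans; apply: psi_mono; exact: kN_le.
    have := F_le (K M) N; have := hkN N; rewrite /m; lra.
  have hU : mu A <= mu (H M) + \sum_(N < M.+1) mu (X N).
    apply: le_trans (_ : mu (fun t => H M t || [exists N, X N t]) <= _).
      apply: mu_mono => t At; case: (boolP (H M t)) => //= /forallPn [N].
      rewrite -leqNgt => hN; apply/existsP; exists N; rewrite /X hN andbT.
      by apply: leq_ltn_trans At; rewrite -ltnS ltn_ord.
    by apply: le_trans (mu_or _ _) _; rewrite lerD2l; apply: mu_exists.
  have sX : \sum_(N < M.+1) mu (X N) <= eps / 4.
    apply: le_trans (dsum M.+1); exact: ler_sum.
  have := hF M; have := dle M; lra.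
pose tM M := proj1_sig (cid (mu_pos (muH M))).
have htM M : H M (tM M) := proj2_sig (cid (mu_pos (muH M))).
have [ts hts] := hlim tM.
pose j := ig ts.
have [n [jn hn']] := hts (kN j) j.
have : (psi (kN j) (tM n) <= j)%N.
  apply: psi_min; apply/forallP => i; apply/implyP; apply: contra.
  by rewrite /j igK; apply: hn'.
have := htM n; move/forallP/(_ (Ordinal (n:=n.+1) (m:=j) jn)) => /=.
by rewrite ltnNge => /negP.
Qed.

Lemma constr : exists r : nat -> R, (forall j, 0 <= r j) /\ (forall N, \sum_(j < N) r j <= 1) /\ (forall eps, 0 < eps -> exists N, 1 - eps < \sum_(j < N) r j) /\ (forall i N, \sum_(j < N) r j * (pe i (g j))%:R <= v).
Proof.
exists r; split; first exact: r_ge0.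
split; first exact: sum_r_le1.
split; last exact: coverage.
by move=> eps /no_escape [N hN]; exists N.+1; rewrite sum_r.
Qed.

End Constr.
End Constr.

Module Esum.
Local Set Implicit Arguments.
Local Unset Strict Implicit.
Local Open Scope classical_set_scope.
Local Open Scope ring_scope.
Local Open Scope ereal_scope.
Section EsumNat.
Variable R : realType.
Implicit Types a : nat -> \bar R.

Lemma esum_nat_ge a N : (forall i, 0 <= a i) ->
  \sum_(i < N) a i <= \esum_(i in [set: nat]) a i.
Proof.
move=> a0; rewrite -nneseries_esumT //.
have := @nneseries_lim_ge R a xpredT 0%N N (fun n _ _ => a0 n).
by rewrite big_mkord.
Qed.

Lemma esum_nat_le a c : (forall i, 0 <= a i) ->
  (forall N, \sum_(i < N) a i <= c) -> \esum_(i in [set: nat]) a i <= c.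
Proof.
move=> a0 h; rewrite -nneseries_esumT //.
apply: lime_le; first exact: is_cvg_nneseries.
by apply: nearW => N; rewrite big_mkord.
Qed.

Lemma esum_fin a n : (forall i, 0 <= a i) -> (forall i, (n <= i)%N -> a i = 0) ->
  \esum_(i in [set: nat]) a i = \sum_(i < n) a i.
Proof.
move=> a0 an; apply/eqP; rewrite eq_le esum_nat_ge // andbT.
apply: esum_nat_le => // N.
have [Nn|nN] := leqP N n; first exact: (@lee_sum_nneg_ord R a xpredT (fun n _ => a0 n) _ _ Nn).
rewrite -(subnKC (ltnW nN)).
elim: (N - n)%N => [|d IH]; first by rewrite addn0.
by rewrite addnS big_ord_recr /= an ?leq_addr // adde0.
Qed.

End EsumNat.

Section EsumBij.
Variables (R : realType) (X : choiceType) (f : nat -> X) (fi : X -> nat).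
Hypotheses (fK : cancel f fi) (fiK : cancel fi f).

Lemma esum_reidx (a : X -> \bar R) :
  \esum_(x in [set: X]) a x = \esum_(i in [set: nat]) a (f i).
Proof.
apply: reindex_esum; rewrite setTT_bijective; by exists fi.
Qed.

Lemma esumZ (x : R) (a : X -> \bar R) : (0 <= x)%R -> (forall t, 0 <= a t) ->
  \esum_(t in [set: X]) (x%:E * a t) = x%:E * \esum_(t in [set: X]) a t.
Proof.
move=> x0 a0; rewrite !esum_reidx -!nneseries_esumT //; last first.
  by move=> n; rewrite mule_ge0.
by rewrite nneseriesZl.
Qed.

Lemma esum_single (t0 : X) (a : X -> \bar R) : (forall t, 0 <= a t) ->
  (forall t, t != t0 -> a t = 0) -> \esum_(t in [set: X]) a t = a t0.
Proof.
move=> a0 at0; rewrite esum_reidx (@esum_fin _ _ (fi t0).+1) //; last first.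
  move=> i hi; apply: at0; apply/eqP => h.
  by move: hi; rewrite -h fK ltnn.
rewrite big_ord_recr /= fiK big1 ?add0e // => -[k hk] _.
by apply: at0; apply/eqP => /= h; move: hk; rewrite -h fK ltnn.
Qed.

End EsumBij.
End Esum.

Module Main1.
Local Set Implicit Arguments.
Local Unset Strict Implicit.
Import Esum.
Local Open Scope classical_set_scope.
Local Open Scope ring_scope.
Section Pimix.
Variables (R : realType) (S T : choiceType) (pi : S -> T -> bool).
Variables (e : nat -> S) (ie : S -> nat) (g : nat -> T) (ig : T -> nat).
Hypotheses (eK : cancel e ie) (ieK : cancel ie e) (gK : cancel g ig) (igK : cancel ig g).

Definition cc (p : S -> R) (t : T) : \bar R :=
  \esum_(s in [set: S]) (p s * (pi s t)%:R)%:E.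
Definition dd (q : T -> R) (s : S) : \bar R :=
  \esum_(t in [set: T]) (q t * (pi s t)%:R)%:E.

Lemma setXRTT (A B : Type) : [set: A] `*`` (fun=> [set: B]) = [set: A * B].
Proof. by apply/seteqP; split => // -[a b]. Qed.

Lemma pimix_s p q : (forall s, 0 <= p s) -> (forall t, 0 <= q t) ->
  pimix pi p q = \esum_(s in [set: S]) ((p s)%:E * dd q s)%E.
Proof.
move=> p0 q0; rewrite /pimix -setXRTT.
rewrite -(@esum_esum R S T setT (fun=> setT) (fun s t => (p s * q t * (pi s t)%:R)%:E)); last first.
  by move=> s t _ _; rewrite lee_fin !mulr_ge0.
apply: eq_esum => s _; rewrite /dd -(esumZ gK igK) //; last first.
  by move=> t; rewrite lee_fin mulr_ge0.
by apply: eq_esum => t _; rewrite -EFinM mulrA.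
Qed.

Lemma pimix_t p q : (forall s, 0 <= p s) -> (forall t, 0 <= q t) ->
  pimix pi p q = \esum_(t in [set: T]) ((q t)%:E * cc p t)%E.
Proof.
move=> p0 q0; rewrite /pimix.
rewrite (@reindex_esum R (T * S)%type (S * T)%type setT setT (fun x => (x.2, x.1))); last first.
  by rewrite setTT_bijective; exists (fun x => (x.2, x.1)) => -[].
rewrite -setXRTT.
rewrite -(@esum_esum R T S setT (fun=> setT) (fun t s => (p s * q t * (pi s t)%:R)%:E)); last first.
  by move=> t s _ _; rewrite lee_fin !mulr_ge0.
apply: eq_esum => t _; rewrite /cc -(esumZ eK ieK) //; last first.
  by move=> s; rewrite lee_fin mulr_ge0.
by apply: eq_esum => s _ /=; rewrite -EFinM; congr (_%:E); ring.
Qed.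

Lemma Delta_ge0 (X : choiceType) (p : X -> R) : @Delta R X p -> forall x, 0 <= p x.
Proof. by case. Qed.

Lemma Delta_sum (X : choiceType) (p : X -> R) : @Delta R X p ->
  \esum_(x in [set: X]) (p x)%:E = 1%E.
Proof. by case. Qed.

Lemma cc_ge0 p t : @Delta R S p -> (0 <= cc p t)%E.
Proof. by move=> /Delta_ge0 p0; apply: esum_ge0 => s _; rewrite lee_fin mulr_ge0. Qed.

Lemma cc_le1 p t : @Delta R S p -> (cc p t <= 1)%E.
Proof.
move=> Dp; rewrite -(Delta_sum Dp); apply: le_esum => s _.
by rewrite lee_fin ler_piMr ?(Delta_ge0 Dp) // lern1 leq_b1.
Qed.

Lemma dd_le1 q s : @Delta R T q -> (dd q s <= 1)%E.
Proof.
move=> Dq; rewrite -(Delta_sum Dq); apply: le_esum => t _.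
by rewrite lee_fin ler_piMr ?(Delta_ge0 Dq) // lern1 leq_b1.
Qed.

Lemma pimix_ge0 p q : @Delta R S p -> @Delta R T q -> (0 <= pimix pi p q)%E.
Proof.
move=> /Delta_ge0 p0 /Delta_ge0 q0; apply: esum_ge0 => -[s t] _.
by rewrite lee_fin !mulr_ge0.
Qed.

Lemma pimix_ge p q (m0 : R) : @Delta R S p -> @Delta R T q -> 0 <= m0 ->
  (forall t, (m0%:E <= cc p t)%E) -> (m0%:E <= pimix pi p q)%E.
Proof.
move=> Dp Dq m00 hm; rewrite pimix_t; try exact: Delta_ge0.
apply: (@le_trans _ _ (\esum_(t in [set: T]) (m0%:E * (q t)%:E))%E).
  rewrite (esumZ gK igK) // ?(Delta_sum Dq) ?mule1 //.
  by move=> t; rewrite lee_fin (Delta_ge0 Dq).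
apply: le_esum => t _; rewrite muleC; apply: lee_pmul => //.
by rewrite lee_fin (Delta_ge0 Dq).
Qed.

Lemma pimix_le p q (m0 : R) : @Delta R S p -> @Delta R T q -> 0 <= m0 ->
  (forall s, (dd q s <= m0%:E)%E) -> (pimix pi p q <= m0%:E)%E.
Proof.
move=> Dp Dq m00 hm; rewrite pimix_s; try exact: Delta_ge0.
apply: (@le_trans _ _ (\esum_(s in [set: S]) (m0%:E * (p s)%:E))%E).
  apply: le_esum => s _; rewrite muleC; apply: lee_pmul => //;
    first [ by rewrite lee_fin (Delta_ge0 Dp)
          | by apply: esum_ge0 => t _; rewrite lee_fin mulr_ge0 ?(Delta_ge0 Dq) ].
rewrite (esumZ eK ieK) // ?(Delta_sum Dp) ?mule1 //.
by move=> s; rewrite lee_fin (Delta_ge0 Dp).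
Qed.

Definition dirac (X : choiceType) (x0 : X) : X -> R := fun x => (x == x0)%:R.

Lemma Delta_dirac_T (t0 : T) : @Delta R T (dirac t0).
Proof.
split; first by move=> t; rewrite /dirac ler0n.
rewrite (esum_single gK igK (t0:=t0)).
- by rewrite /dirac eqxx.
- by move=> t; rewrite lee_fin ler0n.
- by move=> t /negPf; rewrite /dirac => ->.
Qed.

Lemma Delta_dirac_S (s0 : S) : @Delta R S (dirac s0).
Proof.
split; first by move=> t; rewrite /dirac ler0n.
rewrite (esum_single eK ieK (t0:=s0)).
- by rewrite /dirac eqxx.
- by move=> t; rewrite lee_fin ler0n.
- by move=> t /negPf; rewrite /dirac => ->.
Qed.

Lemma pimix_dirac p t0 : @Delta R S p -> pimix pi p (dirac t0) = cc p t0.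
Proof.
move=> Dp; rewrite pimix_t; first last.
- by move=> t; rewrite /dirac ler0n.
- exact: Delta_ge0.
rewrite (esum_single gK igK (t0:=t0)).
- by rewrite /dirac eqxx mul1e.
- by move=> t; rewrite mule_ge0 ?lee_fin ?ler0n ?cc_ge0.
- by move=> t /negPf; rewrite /dirac => ->; rewrite mul0e.
Qed.

End Pimix.
End Main1.

Module Main2.
Local Set Implicit Arguments.
Local Unset Strict Implicit.
Import Esum.
Import Farkas.
Import Game.
Import Ultra.
Import Chain.
Import Constr.
Import Main1.
Local Open Scope classical_set_scope.
Local Open Scope ring_scope.
Section Final.
Variables (R : realType) (S T : choiceType) (pi : S -> T -> bool).
Variables (e : nat -> S) (ie : S -> nat) (g : nat -> T) (ig : T -> nat).
Hypotheses (eK : cancel e ie) (ieK : cancel ie e) (gK : cancel g ig) (igK : cancel ig g).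
Hypothesis AUC : ascending_union_closed (B2down pi).
Variable U : set_system nat.
Hypothesis UU : UltraFilter U.
Hypothesis Uoo : forall N, U [set n | (N <= n)%N].

Local Notation cc := (cc (R:=R) pi).

Lemma cc_nat (p : S -> R) (t : T) : \esum_(s in [set: S]) (p s * (pi s t)%:R)%:E =
  \esum_(i in [set: nat]) (p (e i) * (pi (e i) t)%:R)%:E.
Proof. exact: (esum_reidx eK ieK). Qed.

Lemma attain p : @Delta R S p -> exists ts, forall t, (cc p ts <= cc p t)%E.
Proof.
move=> Dp; have p0 := Delta_ge0 Dp.
set I := ereal_inf (range (cc p)).
have I0 : (0 <= I)%E by apply/ereal_infP => _ [t _ <-]; exact: cc_ge0.
have I1 : (I <= 1)%E.
  by apply: le_trans (cc_le1 pi (g 0) Dp); apply: ereal_inf_lbound; exists (g 0).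
have fI : I \is a fin_num by rewrite ge0_fin_numE // (le_lt_trans I1) ?ltry.
have hx n : exists t, (cc p t < I + ((n.+1)%:R^-1)%:E)%E.
  have hn0 : (0 : R) < (n.+1%:R)^-1 by rewrite invr_gt0 ltr0Sn.
  have [x [t _ <-] h] := lb_ereal_inf_adherent hn0 fI.
  by exists t.
pose tn n := proj1_sig (cid (hx n)).
have htn n : (cc p (tn n) < I + ((n.+1)%:R^-1)%:E)%E := proj2_sig (cid (hx n)).
have [ts hts] := limit_col ieK eK AUC UU Uoo tn.
exists ts.
suff h : (cc p ts <= I)%E.
  by move=> t; apply: le_trans h _; apply: ereal_inf_lbound; exists t.
apply/lee_addgt0Pr => eps eps0.
have [k hk] := ltr_add_invr eps0; rewrite add0r in hk.
rewrite /Main1.cc cc_nat; apply: esum_nat_le.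
  by move=> i; rewrite lee_fin mulr_ge0.
move=> K; have [n [kn hn]] := hts K k.
apply: (@le_trans _ _ (\sum_(i < K) (p (e i) * (pi (e i) (tn n))%:R)%:E)%E).
  apply: lee_sum => i _; rewrite lee_fin ler_wpM2l //.
  by have := hn i (ltn_ord i); case: (pi (e i) ts); case: (pi (e i) (tn n)) => // /(_ isT).
apply: (@le_trans _ _ (cc p (tn n))).
  by rewrite /Main1.cc cc_nat; apply: esum_nat_ge => i; rewrite lee_fin mulr_ge0.
apply: (le_trans (ltW (htn n))); rewrite leeD2l // lee_fin.
apply: le_trans (ltW hk); rewrite lef_pV2 ?posrE ?ltr0Sn //.
by rewrite ler_nat ltnS.
Qed.

Definition col n (j : 'I_#|{ffun 'I_n -> bool}|) : T :=
  xget (g 0) [set t | [ffun i : 'I_n => pi (e i) t] = enum_val j].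
Arguments col : clear implicits.

Lemma col_cover n t : exists j, forall i : 'I_n, pi (e i) (col n j) = pi (e i) t.
Proof.
exists (enum_rank [ffun i : 'I_n => pi (e i) t]) => i.
have : [set t' | [ffun i : 'I_n => pi (e i) t'] =
   enum_val (enum_rank [ffun i : 'I_n => pi (e i) t])] (col n (enum_rank [ffun i : 'I_n => pi (e i) t])).
  by apply: xgetPex; exists t => /=; rewrite enum_rankK.
rewrite /= enum_rankK => h.
by move/ffunP: h => /(_ i); rewrite !ffunE.
Qed.

Lemma finite_step (v : R) (v0 : 0 <= v)
  (hV : forall p, @Delta R S p -> forall m0, 0 <= m0 ->
           (forall t, (m0%:E <= cc p t)%E) -> m0 <= v) n :
  exists Q : 'I_#|{ffun 'I_n -> bool}| -> R, (forall j, 0 <= Q j) /\ (\sum_j Q j = 1) /\ forall i : 'I_n, \sum_j (pi (e i) (col n j))%:R * Q j <= v.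
Proof.
have N0 : (0 < #|{ffun 'I_n -> bool}|)%N.
  have j0 := enum_rank [ffun i : 'I_n => pi (e i) (g 0)].
  exact: (leq_ltn_trans (leq0n j0) (ltn_ord j0)).
case: (game_alt (fun (i : 'I_n) j => (pi (e i) (col n j))%:R) v N0) => //.
move=> [p [p0 [p1 hp]]]; exfalso.
pose p' (s : S) := \sum_(i < n) ((ie s == i)%:R * p i).
have p'e (k : 'I_n) : p' (e k) = p k.
  rewrite /p' eK (bigD1 k) //= eqxx mul1r big1 ?addr0 // => i ik.
  have : (k : nat) != i by rewrite eq_sym; exact: ik.
  by move/negPf => ->; rewrite mul0r.
have p'e0 k : (n <= k)%N -> p' (e k) = 0.
  move=> nk; rewrite /p' eK big1 // => i _.
  have : k != i by rewrite neq_ltn (leq_trans (ltn_ord i) nk) orbT.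
  by move/negPf => ->; rewrite mul0r.
have p'0 s : 0 <= p' s by apply: sumr_ge0 => i _; rewrite mulr_ge0.
have ccp t : cc p' t = (\sum_(i < n) p i * (pi (e i) t)%:R)%:E.
  rewrite /Main1.cc cc_nat (@esum_fin _ _ n).
  - by rewrite sumEFin; congr (_%:E); apply: eq_bigr => i _; rewrite p'e.
  - by move=> i; rewrite lee_fin mulr_ge0.
  - by move=> i ni; rewrite p'e0 // mul0r.
have Dp' : @Delta R S p'.
  split => //; rewrite (esum_reidx eK ieK) (@esum_fin _ _ n).
  - by rewrite sumEFin -p1; congr (_%:E); apply: eq_bigr => i _; rewrite p'e.
  - by move=> i; rewrite lee_fin.
  - by move=> i ni; rewrite p'e0.
pose f j := \sum_i p i * (pi (e i) (col n j))%:R.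
pose m0 := \big[Num.min/(v + 1)]_j f j.
have hm0 : v < m0.
  rewrite /m0; apply: (big_ind (fun x => v < x)).
  - by rewrite ltrDl.
  - by move=> x y vx vy; rewrite lt_min vx vy.
  - by move=> j _; exact: hp j.
have hm0j j : m0 <= f j by rewrite /m0 (bigD1 j) //= ge_min lexx.
have := hV p' Dp' m0 (ltW (le_lt_trans v0 hm0)).
suff h : forall t, (m0%:E <= cc p' t)%E.
  by move=> /(_ h); rewrite leNgt hm0.
move=> t; rewrite ccp lee_fin; have [j hj] := col_cover n t.
by apply: le_trans (hm0j j) _; rewrite /f le_eqVlt; apply/orP; left; apply/eqP; apply: eq_bigr => i _; rewrite hj.
Qed.

Lemma exists_q0 (v : R) (v0 : 0 <= v)
  (hV : forall p, @Delta R S p -> forall m0, 0 <= m0 ->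
           (forall t, (m0%:E <= cc p t)%E) -> m0 <= v) :
  exists2 q0 : T -> R, @Delta R T q0 & forall s, (dd pi q0 s <= v%:E)%E.
Proof.
pose Qn n := proj1_sig (cid (finite_step v0 hV n)).
have hQ n := proj2_sig (cid (finite_step v0 hV n)).
pose w n (P : T -> bool) := \sum_j Qn n j * (P (col n j))%:R.
have w01 n P : 0 <= w n P <= 1.
  have [Q0 [Q1 _]] := hQ n.
  apply/andP; split; first by apply: sumr_ge0 => j _; rewrite mulr_ge0 ?Q0 ?ler0n.
  rewrite /w; apply: (@le_trans _ _ (\sum_j Qn n j)); last by rewrite Q1.
  by apply: ler_sum => j _; rewrite ler_piMr ?Q0 // lern1 leq_b1.
have bw P : bnd (fun n => w n P) by apply: bnd01 => n; exact: w01.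
pose mu P := L U (fun n => w n P).
have mu_ge0 P : 0 <= mu P.
  rewrite -(L_cst UU 0); apply: (L_le UU (bnd_cst 0) (bw P)).
  by apply: filterS filterT => n _ /=; have /andP[] := w01 n P.
have muT : mu xpredT = 1.
  rewrite /mu (_ : (fun n => w n xpredT) = fun=> 1) ?L_cst //.
  apply: funext => n; have [_ [Q1 _]] := hQ n; rewrite -Q1.
  by apply: eq_bigr => j _; rewrite mulr1.
have mu_add P Q : mu P = mu (fun t => P t && Q t) + mu (fun t => P t && ~~ Q t).
  rewrite /mu -LD //; congr (L U _); apply: funext => n.
  rewrite /w -big_split; apply: eq_bigr => j _ /=.
  by case: (P _); case: (Q _); rewrite /= ?mulr0 ?mulr1 ?addr0 ?add0r.
have mu_cov i : mu (fun t => pi (e i) t) <= v.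
  rewrite -(L_cst UU v); apply: (L_le_ev UU Uoo (bw _) (bnd_cst v)).
  exists i.+1 => n hn; have [_ [_ Qc]] := hQ n.
  apply: le_trans (Qc (Ordinal hn)); rewrite /w le_eqVlt; apply/orP; left.
  by apply/eqP; apply: eq_bigr => j _; rewrite mulrC.
have hlim := limit_col ieK eK AUC UU Uoo.
have [r [r0 [r1 [r2 rc]]]] := @constr R T (fun i t => pi (e i) t) g ig igK U UU Uoo
   mu mu_ge0 muT mu_add v mu_cov hlim.
exists (fun t => r (ig t)).
  split; first by move=> t.
  rewrite (esum_reidx gK igK); under eq_esum do rewrite gK.
  apply/eqP; rewrite eq_le; apply/andP; split.
    apply: esum_nat_le; first by move=> i; rewrite lee_fin.
    by move=> N; rewrite sumEFin lee_fin; exact: r1.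
  apply/lee_addgt0Pr => eps eps0; have [N hN] := r2 eps eps0.
  apply: (@le_trans _ _ ((\sum_(j < N) r j)%:E + eps%:E)%E).
    by rewrite -EFinD lee_fin; lra.
  rewrite leeD2r //; apply: le_trans (esum_nat_ge N _); last by move=> i; rewrite lee_fin.
  by rewrite sumEFin.
move=> s; rewrite /dd (esum_reidx gK igK); under eq_esum do rewrite gK.
apply: esum_nat_le; first by move=> i; rewrite lee_fin mulr_ge0.
move=> N; rewrite sumEFin lee_fin.
by have := rc (ie s) N; rewrite ieK.
Qed.

End Final.
End Main2.

Import Main1 Main2.
Local Open Scope classical_set_scope.
Local Open Scope ring_scope.

Theorem theorem2p11 (R : realType) (S T : choiceType) (pi : S -> T -> bool) :
  countably_infinite S -> countably_infinite T ->
  ascending_union_closed (B2down pi) ->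
  [/\ (forall p : S -> R, @Delta R S p ->
         exists2 q0 : T -> R, @Delta R T q0 &
           pimix pi p q0 = ereal_inf [set pimix pi p q | q in @Delta R T]),
      (exists2 q0 : T -> R, @Delta R T q0 &
         ereal_sup [set pimix pi p q0 | p in @Delta R S] =
         ereal_inf [set ereal_sup [set pimix pi p q | p in @Delta R S]
                   | q in @Delta R T]) &
      ereal_sup [set ereal_inf [set pimix pi p q | q in @Delta R T]
                | p in @Delta R S] =
      ereal_inf [set ereal_sup [set pimix pi p q | p in @Delta R S]
                | q in @Delta R T]].
Proof.
move=> [e [ie eK ieK]] [g [ig gK igK]] AUC.
have [U [UU hU]] := ultraFilterLemma (@eventually_filter).
have Uoo N : U [set n | (N <= n)%N] by apply: hU; exists N.
have part1 : forall p : S -> R, @Delta R S p ->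
         exists2 q0 : T -> R, @Delta R T q0 &
           pimix pi p q0 = ereal_inf [set pimix pi p q | q in @Delta R T].
  move=> p Dp; have [ts hts] := attain g eK ieK AUC UU Uoo Dp.
  exists (dirac R ts); first exact: (Delta_dirac_T R gK igK).
  rewrite (pimix_dirac pi eK ieK gK igK) //; apply/eqP; rewrite eq_le; apply/andP; split.
    apply/ereal_infP => _ [q Dq <-].
    have fin : Main1.cc pi p ts = (fine (Main1.cc pi p ts))%:E.
      rewrite fineK // ge0_fin_numE ?cc_ge0 //.
      by rewrite (le_lt_trans (cc_le1 pi ts Dp)) ?ltry.
    rewrite fin; apply: (pimix_ge eK ieK gK igK) => //.
      by rewrite -lee_fin -fin cc_ge0.
    by move=> t; rewrite -fin; exact: hts.
  apply: ereal_inf_lbound; exists (dirac R ts); first exact: (Delta_dirac_T R gK igK).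
  by rewrite (pimix_dirac pi eK ieK gK igK).
set V := ereal_sup [set ereal_inf [set pimix pi p q | q in @Delta R T] | p in @Delta R S].
have V0 : (0 <= V)%E.
  apply: le_trans (ereal_sup_ubound _); last first.
    by exists (dirac R (e 0%N)); first exact: (Delta_dirac_S R eK ieK).
  apply/ereal_infP => _ [q Dq <-]; apply: pimix_ge0 => //.
  exact: (Delta_dirac_S R eK ieK).
have V1 : (V <= 1)%E.
  apply/ereal_supP => _ [p Dp <-].
  apply: le_trans (cc_le1 pi (g 0%N) Dp).
  rewrite -(pimix_dirac pi eK ieK gK igK) //; apply: ereal_inf_lbound.
  by exists (dirac R (g 0%N)); first exact: (Delta_dirac_T R gK igK).
set v := fine V.
have Vv : V = v%:E by rewrite fineK // ge0_fin_numE // (le_lt_trans V1) ?ltry.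
have v0 : 0 <= v by rewrite -lee_fin -Vv.
have hV : forall p, @Delta R S p -> forall m0, 0 <= m0 ->
           (forall t, (m0%:E <= Main1.cc pi p t)%E) -> m0 <= v.
  move=> p Dp m0 m00 hm; rewrite -lee_fin -Vv.
  apply: le_trans (ereal_sup_ubound _); last by exists p.
  by apply/ereal_infP => _ [q Dq <-]; exact: (pimix_ge eK ieK gK igK).
have [q0 Dq0 hq0] := exists_q0 eK ieK gK igK AUC UU Uoo v0 hV.
set W := ereal_inf [set ereal_sup [set pimix pi p q | p in @Delta R S] | q in @Delta R T].
have sq0 : (ereal_sup [set pimix pi p q0 | p in @Delta R S] <= V)%E.
  apply/ereal_supP => _ [p Dp <-]; rewrite Vv.
  exact: (pimix_le eK ieK gK igK).
have VW : (V <= W)%E.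
  apply/ereal_infP => _ [q Dq <-]; apply/ereal_supP => _ [p Dp <-].
  apply: (@le_trans _ _ (pimix pi p q)).
    by apply: ereal_inf_lbound; exists q.
  by apply: ereal_sup_ubound; exists p.
have Wq0 : (W <= ereal_sup [set pimix pi p q0 | p in @Delta R S])%E.
  by apply: ereal_inf_lbound; exists q0.
split => //.
  exists q0 => //; apply/eqP; rewrite eq_le; apply/andP; split => //.
  exact: le_trans sq0 VW.
by apply/eqP; rewrite eq_le VW /=; exact: le_trans Wq0 sq0.
Qed.
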